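(* Let $n\ge 1$, let $\mathcal M$ be a doubly stochastic $n\times n$ matrix and let $\kappa\le\frac{7n-4}{8n-4}$. Then there exists a directed $(2n-1)$-regular multigraph on $[n]$ whose weak direct throughput with respect to $\mathcal M$ is at least $\kappa$.
   Context: Let $n\ge 1$ and $[n]=\{1,\dots,n\}$. Networks are finite directed multigraphs on vertex set $[n]$; self-loops and parallel arcs are allowed. A directed multigraph is directed $r$-regular if every vertex has exactly $r$ outgoing and exactly $r$ incoming arcs (a self-loop at $v$ counts as one outgoing and one incoming arc of $v$). An $n\times n$ matrix is doubly stochastic if all entries are nonnegative and every row and every column sums to $1$. In a directed $(2n-1)$-regular multigraph $G$ on $[n]$ every arc has capacity $\frac{1}{2n-1}$. $G$ directly hosts a nonnegative $n\times n$ matrix $\mathcal M'=(a'_{i,j})$ if $a'_{u,v}\le \frac{m_{u,v}}{2n-1}$ for all $u,v\in[n]$, where $m_{u,v}$ is the number of arcs from $u$ to $v$ in $G$. The weak direct throughput of $G$ with respect to a doubly stochastic $\mathcal M=(a_{i,j})$ is the largest $\eta$ such that $G$ directly hosts some matrix $\mathcal M'=(a'_{i,j})$ with $0\le a'_{i,j}\le a_{i,j}$ for all $i,j$ and $\sum_{i,j}a'_{i,j}=\eta\sum_{i,j}a_{i,j}=\eta n$. *)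

(* Defs.v *)
From HB Require Import structures.
From mathcomp Require Import all_boot all_order all_algebra.
From mathcomp Require Import classical_sets reals.
Set Implicit Arguments. Unset Strict Implicit. Unset Printing Implicit Defensive.
Import Order.TTheory GRing.Theory Num.Theory.
Local Open Scope ring_scope.

(* A finite directed multigraph on [n] (self-loops and parallel arcs allowed)
   is given by its arc multiplicities: [m u v] = number of arcs from u to v.
   Vertex set [n] = {1..n} is represented by 'I_n = {0..n-1}. *)
Definition multigraph (n : nat) := 'I_n -> 'I_n -> nat.

(* directed r-regular: every vertex has r outgoing and r incoming arcs
   (a self-loop at v counts once in the out-degree and once in the in-degree). *)
Definition directed_regular (n : nat) (G : multigraph n) (r : nat) : Prop :=
  (forall u : 'I_n, (\sum_(v < n) G u v)%N = r) /\
  (forall v : 'I_n, (\sum_(u < n) G u v)%N = r).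

Definition doubly_stochastic (R : realType) (n : nat) (M : 'M[R]_n) : Prop :=
  (forall i j, 0 <= M i j) /\
  (forall i, \sum_(j < n) M i j = 1) /\
  (forall j, \sum_(i < n) M i j = 1).

(* Each arc has capacity 1/(2n-1); G directly hosts M' iff
   M'_{u,v} <= m_{u,v} / (2n-1). *)
Definition directly_hosts (R : realType) (n : nat) (G : multigraph n)
    (M' : 'M[R]_n) : Prop :=
  forall u v : 'I_n, M' u v <= (G u v)%:R / (2 * n%:R - 1).

Definition wdt_feasible (R : realType) (n : nat) (G : multigraph n)
    (M : 'M[R]_n) (eta : R) : Prop :=
  exists M' : 'M[R]_n,
    (forall i j, 0 <= M' i j /\ M' i j <= M i j) /\
    directly_hosts G M' /\
    \sum_(i < n) \sum_(j < n) M' i j = eta * \sum_(i < n) \sum_(j < n) M i j.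

(* The weak direct throughput: the largest achievable eta (taken as the
   supremum of the achievable set, which is attained). *)
Definition weak_direct_throughput (R : realType) (n : nat) (G : multigraph n)
    (M : 'M[R]_n) : R :=
  sup [set eta | wdt_feasible G M eta].

(* Main.v *)
Require Import Defs.
From HB Require Import structures.
From mathcomp Require Import all_boot all_order all_algebra.
From mathcomp Require Import classical_sets reals.
From mathcomp Require Import zify ring lra.
Set Implicit Arguments. Unset Strict Implicit. Unset Printing Implicit Defensive.
Import Order.TTheory GRing.Theory Num.Theory.
Local Open Scope ring_scope.

Lemma kernel_exists (F : fieldType) (T U : finType) (A : {set T}) (B : {set U})
  (a : T -> U -> F) :
  (#|B| < #|A|)%N -> exists x : T -> F, (forall t, t \notin A -> x t = 0) /\
   (exists t, x t != 0) /\ (forall u, u \in B -> \sum_(t in A) x t * a t u = 0).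
Proof.
move=> hBA.
pose Am : 'M[F]_(#|A|, #|B|) := \matrix_(i, j) a (enum_val i) (enum_val j).
have hK : kermx Am != 0.
  rewrite -mxrank_eq0 mxrank_ker; have := rank_leq_col Am; lia.
have [i [j hij]] : exists i j, kermx Am i j != 0.
  case: (pickP (fun ij : 'I_#|A| * 'I_#|A| => kermx Am ij.1 ij.2 != 0)) => [[i0 j0] h|H].
    by exists i0, j0.
  case/negP: hK; apply/eqP/matrixP => i0 j0; rewrite [RHS]mxE.
  by move: (H (i0, j0)) => /= /negbFE /eqP.
pose v := row i (kermx Am).
have hv : v *m Am = 0.
  rewrite /v -row_mul mulmx_ker.
  by rewrite row0.
exists (fun t => \sum_(k | enum_val k == t) v 0 k); split; [|split].
- move=> t tA; apply: big_pred0 => k; apply/negbTE; apply: contraNneq tA => <-.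
  exact: enum_valP.
- exists (enum_val j); rewrite (big_pred1 j); first by rewrite /v [row _ _ _ _]mxE.
  by move=> k /=; apply/eqP/eqP => [/enum_val_inj|->].
- move=> u uB.
  pose ju : 'I_#|B| := enum_rank_in uB u.
  have := congr1 (fun w : 'rV_#|B| => w 0 ju) hv.
  move=> /= H0; rewrite mxE [RHS]mxE in H0; apply: (eq_trans _ H0).
  rewrite [RHS](partition_big (@enum_val _ (pred_of_set A)) (fun t => t \in A)) /=; last by move=> k _; exact: enum_valP.
  apply: eq_bigr => t tA; rewrite big_distrl /=; apply: eq_bigr => k /eqP ek.
  by rewrite mxE /Am [X in _ = _ * X]mxE /ju enum_rankK_in // ek.
Qed.

Lemma fiber_count (T U : finType) (f : T -> U) (S : {set T}) :
  (forall t, t \in S -> exists t', [/\ t' \in S, f t' = f t & t' != t]) ->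
  (2 * #|f @: S| <= #|S|)%N.
Proof.
move=> H.
rewrite -[X in (_ <= X)%N]sum1_card (partition_big f (fun u => u \in f @: S)) /=; last first.
  by move=> t tS; apply: imset_f.
rewrite mulnC -sum_nat_const; apply: leq_sum => u /imsetP [t tS ->].
rewrite sum1_card; apply/card_gt1P.
have [t' [t'S eft t't]] := H t tS.
exists t, t'; split.
- by rewrite unfold_in /= tS eqxx.
- by rewrite unfold_in /= t'S eft eqxx.
- by rewrite eq_sym.
Qed.

Section R.
Variable R : realFieldType.

Definition isone (z : R) : nat := (z == 1).

Lemma zo (z : R) : 0 <= z <= 1 -> ~~ ((0 < z) && (z < 1)) -> z = (isone z)%:R.
Proof.
rewrite /isone; case/andP=> z0 z1 h; case: eqP => [->//|/eqP zn1] /=.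
have zl1 : z < 1 by rewrite lt_neqAle zn1 z1.
move: h; rewrite zl1 andbT -leNgt => zle; apply/eqP; rewrite eq_le zle z0 //.
Qed.

Lemma nat_gap (s c : nat) (z : R) : z = s%:R - c%:R -> 0 < z -> z < 1 -> False.
Proof.
move=> -> h1 h2.
have : (c < s)%N by rewrite -(ltr_nat R); lra.
have : (s < c.+1)%N by rewrite -(ltr_nat R) -addn1 natrD; lra.
lia.
Qed.

Lemma two_in_row n (Z : 'M[R]_n) r j0 :
  (forall i j, 0 <= Z i j <= 1) -> (exists s : nat, \sum_j Z r j = s%:R) ->
  (0 < Z r j0) && (Z r j0 < 1) ->
  exists j1, (j1 != j0) && ((0 < Z r j1) && (Z r j1 < 1)).
Proof.
move=> Zb [s hs] hj0.
case: (pickP (fun j1 => (j1 != j0) && ((0 < Z r j1) && (Z r j1 < 1)))) => [j1 h|H].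
  by exists j1.
exfalso.
rewrite (bigD1 j0) //= in hs.
have e : \sum_(j | j != j0) Z r j = (\sum_(j | j != j0) isone (Z r j))%N%:R.
  rewrite natr_sum; apply: eq_bigr => j jn; apply: zo => //.
  by move: (H j); rewrite /= jn => /negbT.
rewrite e in hs.
case/andP: hj0 => h1 h2.
apply: (nat_gap (s := s) (c := (\sum_(j | j != j0) isone (Z r j))%N)) h1 h2; rewrite -hs; ring.
Qed.



Definition dot n (W Z : 'M[R]_n) := \sum_i \sum_j W i j * Z i j.
Definition fracS n (Z : 'M[R]_n) :=
  [set t : 'I_n * 'I_n | (0 < Z t.1 t.2) && (Z t.1 t.2 < 1)].

Lemma round_base n (W Z : 'M[R]_n) : #|fracS Z| = 0%N ->
  (forall i j, 0 <= Z i j <= 1) ->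
  exists B : 'M[R]_n, (forall i j, B i j = 0 \/ B i j = 1) /\
    (forall i, \sum_j B i j = \sum_j Z i j) /\ (forall j, \sum_i B i j = \sum_i Z i j) /\
    dot W Z <= dot W B.
Proof.
move=> /eqP; rewrite cards_eq0 => /eqP h0 Zb; exists Z; split => //.
move=> i j; have : (i, j) \notin fracS Z by rewrite h0 inE.
rewrite inE /= => hn; rewrite (zo (Zb i j) hn) /isone.
by case: (Z i j == 1); [right|left].
Qed.

End R.

Section S.
Variable R : realFieldType.

Lemma circ n (Z : 'M[R]_n) :
  (forall i j, 0 <= Z i j <= 1) ->
  (forall i, exists s : nat, \sum_j Z i j = s%:R) ->
  (forall j, exists s : nat, \sum_i Z i j = s%:R) ->
  (0 < #|fracS Z|)%N ->
  exists C : 'M[R]_n, (forall i j, (i, j) \notin fracS Z -> C i j = 0) /\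
    (exists i j, C i j != 0) /\
    (forall i, \sum_j C i j = 0) /\ (forall j, \sum_i C i j = 0).
Proof.
move=> Zb hr hc; rewrite card_gt0 => /set0Pn [s0 s0S].
set S := fracS Z.
pose RS := [set t.1 | t in S].
pose CS := [set t.2 | t in S].
pose c0 := s0.2.
pose Bc : {set 'I_n + 'I_n} := [set inl r | r in RS] :|: [set inr c | c in CS :\ c0].
pose a (t : 'I_n * 'I_n) (u : 'I_n + 'I_n) : R :=
  match u with inl r => (t.1 == r)%:R | inr c => (t.2 == c)%:R end.
have hRS : (2 * #|RS| <= #|S|)%N.
  apply: fiber_count => -[i j]; rewrite inE /= => hij.
  have [j1 /andP [j1j hj1]] := two_in_row Zb (hr i) hij.
  by exists (i, j1); split => //; [rewrite inE | apply: contra j1j => /eqP [->]].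
have hCS : (2 * #|CS| <= #|S|)%N.
  apply: fiber_count => -[i j]; rewrite inE /= => hij.
  have ZTb : forall i j, 0 <= Z^T i j <= 1 by move=> ? ?; rewrite mxE.
  have hrT : exists s : nat, \sum_k Z^T j k = s%:R.
    by have [s hs] := hc j; exists s; rewrite -hs; apply: eq_bigr => k _; rewrite mxE.
  have hij' : (0 < Z^T j i) && (Z^T j i < 1) by rewrite !mxE.
  have [i1 /andP [i1i]] := two_in_row ZTb hrT hij'.
  rewrite !mxE => hi1.
  by exists (i1, j); split => //; [rewrite inE | apply: contra i1i => /eqP [->]].
have c0CS : c0 \in CS by apply: imset_f.
have hB : (#|Bc| < #|S|)%N.
  have e1 : #|[set inl r | r in RS] : {set 'I_n + 'I_n}| = #|RS|.
    by apply: card_imset => ? ? [].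
  have e2 : #|[set inr c | c in CS :\ c0] : {set 'I_n + 'I_n}| = #|CS :\ c0|.
    by apply: card_imset => ? ? [].
  have e3 := cardsD1 c0 CS; rewrite c0CS in e3.
  rewrite /Bc cardsU e1 e2; lia.
have [x [x0 [[t xt] hx]]] := kernel_exists a hB.
pose C : 'M[R]_n := \matrix_(i, j) x (i, j).
have C0 : forall i j, (i, j) \notin S -> C i j = 0 by move=> i j h; rewrite mxE x0.
have xS : forall (g : 'I_n * 'I_n -> R),
    \sum_(t in S) x t * g t = \sum_i \sum_j C i j * g (i, j).
  move=> g; rewrite pair_big /= big_mkcond /=; apply: eq_bigr => -[i j] _ /=.
  by rewrite mxE; case: ifP => // /negbT /x0 ->; rewrite mul0r.
have Crow : forall i, \sum_j C i j = 0.
  move=> i; case: (boolP (i \in RS)) => iR; last first.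
    apply: big1 => j _; apply: C0; apply: contra iR => h.
    by apply/imsetP; exists (i, j).
  have hin : inl i \in Bc by rewrite /Bc inE; apply/orP; left; apply: imset_f.
  have := hx (inl i) hin.
  rewrite xS (bigD1 i) //= [X in _ + X]big1 ?addr0; last first.
    by move=> k ki; apply: big1 => j _; rewrite /a /= (negbTE ki) mulr0.
  by rewrite eqxx; under eq_bigr do rewrite mulr1.
have Ccol' : forall j, j != c0 -> \sum_i C i j = 0.
  move=> j jc; case: (boolP (j \in CS)) => jC; last first.
    apply: big1 => i _; apply: C0; apply: contra jC => h.
    by apply/imsetP; exists (i, j).
  have hin : inr j \in Bc by rewrite /Bc inE; apply/orP; right; apply: imset_f; rewrite !inE jc.
  have := hx (inr j) hin.
  rewrite xS exchange_big (bigD1 j) //= [X in _ + X]big1 ?addr0; last first.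
    by move=> k kj; apply: big1 => i _; rewrite /a /= (negbTE kj) mulr0.
  by rewrite eqxx; under eq_bigr do rewrite mulr1.
have Ccol : forall j, \sum_i C i j = 0.
  move=> j; case: (eqVneq j c0) => [->|]; last exact: Ccol'.
  have tot : \sum_j \sum_i C i j = 0 by rewrite exchange_big big1.
  have e : \sum_(k | k != c0) \sum_i C i k = 0 by apply: big1 => k kc; exact: Ccol'.
  by rewrite (bigD1 c0) //= e addr0 in tot.
exists C; split => //; split => //.
exists t.1, t.2; rewrite mxE; by case: t xt.
Qed.

End S.

Section S2.
Variable R : realFieldType.

Lemma rounding n (W : 'M[R]_n) : forall N (Z : 'M[R]_n), (#|fracS Z| <= N)%N ->
  (forall i j, 0 <= Z i j <= 1) ->
  (forall i, exists s : nat, \sum_j Z i j = s%:R) ->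
  (forall j, exists s : nat, \sum_i Z i j = s%:R) ->
  exists B : 'M[R]_n, (forall i j, B i j = 0 \/ B i j = 1) /\
    (forall i, \sum_j B i j = \sum_j Z i j) /\ (forall j, \sum_i B i j = \sum_i Z i j) /\
    dot W Z <= dot W B.
Proof.
elim=> [|N IH] Z hN Zb hr hc.
  by apply: round_base => //; apply/eqP; rewrite -leqn0.
case: (posnP #|fracS Z|) => [h0|hpos]; first exact: round_base h0 Zb.
have [C0 [C00 [Cnz [Crow Ccol]]]] := circ Zb hr hc hpos.
have hC :
  exists C : 'M[R]_n, [/\ (forall i j, (i, j) \notin fracS Z -> C i j = 0),
    (exists i j, C i j != 0), (forall i, \sum_j C i j = 0),
    (forall j, \sum_i C i j = 0) & 0 <= dot W C].
  case: (lerP 0 (dot W C0)) => hd; first by exists C0; split.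
  exists (- C0); split.
  - by move=> i j h; rewrite mxE C00 // oppr0.
  - by have [i [j h]] := Cnz; exists i, j; rewrite mxE oppr_eq0.
  - by move=> i; under eq_bigr do rewrite mxE; rewrite sumrN Crow oppr0.
  - by move=> j; under eq_bigr do rewrite mxE; rewrite sumrN Ccol oppr0.
  - rewrite /dot; under eq_bigr do under eq_bigr do rewrite mxE mulrN.
    move: hd; rewrite /dot; under eq_bigr do rewrite sumrN; rewrite sumrN; lra.
have [C [CS [i0 [j0 Ci0]] Cr Cc Cd]] := hC.
pose ratio (t : 'I_n * 'I_n) : R :=
  if 0 < C t.1 t.2 then (1 - Z t.1 t.2) / C t.1 t.2 else Z t.1 t.2 / (- C t.1 t.2).
pose D := [pred t : 'I_n * 'I_n | C t.1 t.2 != 0].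
have Di0 : (i0, j0) \in D by [].
case: (arg_minP ratio Di0) => tm tmD tmmin.
have hZ : forall t, t \in fracS Z -> 0 < Z t.1 t.2 /\ Z t.1 t.2 < 1.
  by move=> t; rewrite inE => /andP.
have CSt : forall t, C t.1 t.2 != 0 -> t \in fracS Z.
  move=> [a b] /= h; apply: contraR h => h; rewrite CS //.
have tmS := CSt tm tmD.
have [z0 z1] := hZ tm tmS.
pose tau := ratio tm.
have Cneg : forall t, C t.1 t.2 != 0 -> (0 < C t.1 t.2) = false -> 0 < - C t.1 t.2.
  move=> t h1 /negbT; rewrite -leNgt => h2; rewrite oppr_gt0 lt_neqAle h1 h2.
  done.
have tau_pos : 0 < tau.
  rewrite /tau /ratio; case: ifP => hp.
  - by apply: divr_gt0 => //; lra.
  - by apply: divr_gt0 => //; apply: Cneg.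
have key : forall t, 0 <= Z t.1 t.2 + tau * C t.1 t.2 <= 1.
  move=> t; have [a1 a2] := andP (Zb t.1 t.2).
  case: (eqVneq (C t.1 t.2) 0) => [->|Ct]; first by rewrite mulr0 addr0 a1 a2.
  have := tmmin t Ct; rewrite -/tau /ratio; case: ifP => hp.
  - rewrite ler_pdivlMr // => h.
    have : 0 <= tau * C t.1 t.2 by apply: mulr_ge0; lra.
    move=> h'; apply/andP; split; lra.
  - have hn := Cneg t Ct hp; rewrite ler_pdivlMr // => h.
    have : 0 <= tau * - C t.1 t.2 by apply: mulr_ge0; lra.
    rewrite mulrN in h * => h'; apply/andP; split; lra.
pose Z' : 'M[R]_n := \matrix_(i, j) (Z i j + tau * C i j).
have Z'r : forall i, \sum_j Z' i j = \sum_j Z i j.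
  move=> i; under eq_bigr do rewrite mxE.
  by rewrite big_split /= -mulr_sumr Cr mulr0 addr0.
have Z'c : forall j, \sum_i Z' i j = \sum_i Z i j.
  move=> j; under eq_bigr do rewrite mxE.
  by rewrite big_split /= -mulr_sumr Cc mulr0 addr0.
have Z'd : dot W Z <= dot W Z'.
  have -> : dot W Z' = dot W Z + tau * dot W C.
    rewrite /dot mulr_sumr -big_split; apply: eq_bigr => i _.
    rewrite mulr_sumr -big_split; apply: eq_bigr => j _; rewrite mxE /=; ring.
  have : 0 <= tau * dot W C by apply: mulr_ge0; lra.
  lra.
have hprop : fracS Z' \proper fracS Z.
  apply/properP; split.
  - apply/fintype.subsetP => t; rewrite inE mxE => ht.
    case: (eqVneq (C t.1 t.2) 0) => [h|h]; last exact: CSt.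
    by move: ht; rewrite h mulr0 addr0 => ht; rewrite inE ht.
  - exists tm => //; rewrite inE mxE negb_and.
    move: tmD; rewrite /tau /ratio; case: ifP => hp Ct.
    + by rewrite divfK // addrC subrK ltxx orbT.
    + have hn := Cneg tm Ct hp.
      have -> : Z tm.1 tm.2 + Z tm.1 tm.2 / - C tm.1 tm.2 * C tm.1 tm.2 = 0.
        by rewrite invrN mulrN mulNr divfK // subrr.
      by rewrite ltxx.
have hN' : (#|fracS Z'| <= N)%N.
  have := proper_card hprop; lia.
have Z'b : forall i j, 0 <= Z' i j <= 1 by move=> i j; rewrite mxE; exact: (key (i, j)).
have hr' : forall i, exists s : nat, \sum_j Z' i j = s%:R by move=> i; rewrite Z'r.
have hc' : forall j, exists s : nat, \sum_i Z' i j = s%:R by move=> j; rewrite Z'c.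
have [B [B01 [Br [Bc Bd]]]] := IH Z' hN' Z'b hr' hc'.
exists B; split => //; split; first by move=> i; rewrite Br Z'r.
split; first by move=> j; rewrite Bc Z'c.
exact: le_trans Z'd Bd.
Qed.

End S2.

Lemma sum_quarter (R : numFieldType) n : \sum_(i < n) \sum_(j < n) (1/4 : R) = n%:R * n%:R / 4.
Proof.
by rewrite sumr_const sumr_const card_ord -mulrnA -[(1/4) *+ _]mulr_natr natrM; field.
Qed.

Lemma sum3 (R : pzRingType) n (f g h : 'I_n -> 'I_n -> R) :
  \sum_i \sum_j (f i j - g i j + h i j) =
  \sum_i \sum_j f i j - \sum_i \sum_j g i j + \sum_i \sum_j h i j.
Proof.
rewrite -sumrB -big_split /=; apply: eq_bigr => i _.
by rewrite -sumrB -big_split.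
Qed.

Theorem theorem4p3 (R : realType) (n : nat) (M : 'M[R]_n) (kappa : R) :
  (1 <= n)%N ->
  doubly_stochastic M ->
  kappa <= (7 * n%:R - 4) / (8 * n%:R - 4) ->
  exists G : multigraph n,
    directed_regular G (2 * n - 1)%N /\ kappa <= weak_direct_throughput G M.
Proof.
move=> n1 [Mpos [Mrow Mcol]] hk.
set k := (2 * n - 1)%N.
have nR : 1 <= n%:R :> R by rewrite ler1n.
set c := (2 * n%:R - 1 : R).
have kR : c = k%:R by rewrite /c /k natrB ?natrM //; lia.
have cpos : 0 < c by rewrite /c; lra.
pose X i j := c * M i j.
have X0 : forall i j, 0 <= X i j by move=> i j; apply: mulr_ge0 => //; lra.
pose F i j := Num.truncn (X i j).
have FX : forall i j, (F i j)%:R <= X i j < (F i j)%:R + 1.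
  by move=> i j; rewrite natr1; apply: truncn_itv.
pose P : 'M[R]_n := \matrix_(i, j) (X i j - (F i j)%:R).
have Pb : forall i j, 0 <= P i j <= 1.
  move=> i j; rewrite mxE; have /andP [h1 h2] := FX i j; apply/andP; split; lra.
have Xr : forall i, \sum_j X i j = c by move=> i; rewrite -mulr_sumr Mrow mulr1.
have Xc : forall j, \sum_i X i j = c by move=> j; rewrite -mulr_sumr Mcol mulr1.
have hr : forall i, exists s : nat, \sum_j P i j = s%:R.
  move=> i; exists (k - \sum_j F i j)%N.
  have e : \sum_j P i j = k%:R - (\sum_j F i j)%N%:R.
    rewrite (eq_bigr (fun j => X i j - (F i j)%:R)); last by move=> j _; rewrite mxE.
    by rewrite sumrB Xr natr_sum kR.
  have hle : (\sum_j F i j <= k)%N.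
    rewrite -(ler_nat R) -kR -(Xr i) natr_sum.
    by apply: ler_sum => j _; have /andP [] := FX i j.
  by rewrite e (natrB _ hle).
have hc : forall j, exists s : nat, \sum_i P i j = s%:R.
  move=> j; exists (k - \sum_i F i j)%N.
  have e : \sum_i P i j = k%:R - (\sum_i F i j)%N%:R.
    rewrite (eq_bigr (fun i => X i j - (F i j)%:R)); last by move=> i _; rewrite mxE.
    by rewrite sumrB Xc natr_sum kR.
  have hle : (\sum_i F i j <= k)%N.
    rewrite -(ler_nat R) -kR -(Xc j) natr_sum.
    by apply: ler_sum => i _; have /andP [] := FX i j.
  by rewrite e (natrB _ hle).
have [B [B01 [Br [Bc Bd]]]] := rounding P (leqnn _) Pb hr hc.
have Bv : forall u v, B u v = (isone (B u v))%:R.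
  by move=> u v; rewrite /isone; case: (B01 u v) => ->; rewrite ?eqxx // eq_sym oner_eq0.
pose G : multigraph n := fun u v => (F u v + isone (B u v))%N.
have GR : forall u v, (G u v)%:R = (F u v)%:R + B u v by move=> u v; rewrite natrD -Bv.
have Pe : forall u v, P u v = X u v - (F u v)%:R by move=> u v; rewrite mxE.
exists G; split.
  split.
  - move=> u; apply/eqP; rewrite -(eqr_nat R) natr_sum -kR -(Xr u); apply/eqP.
    under eq_bigr do rewrite GR.
    rewrite big_split Br /= -big_split; apply: eq_bigr => v _; rewrite Pe /=; ring.
  - move=> v; apply/eqP; rewrite -(eqr_nat R) natr_sum -kR -(Xc v); apply/eqP.
    under eq_bigr do rewrite GR.
    rewrite big_split Bc /= -big_split; apply: eq_bigr => u _; rewrite Pe /=; ring.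
pose M' : 'M[R]_n := \matrix_(u, v) (if B u v == 1 then M u v else (F u v)%:R / c).
have cM' : forall u v, c * M' u v = X u v - P u v + P u v * B u v.
  move=> u v; rewrite mxE Pe; case: (B01 u v) => ->; rewrite ?eqxx.
  - rewrite eq_sym oner_eq0 mulr0 mulrC divfK ?gt_eqF //; ring.
  - rewrite mulr1 /X; ring.
have M'b : forall i j, 0 <= M' i j /\ M' i j <= M i j.
  move=> i j; rewrite mxE; case: ifP => _; first by split.
  split; first by apply: divr_ge0 => //; lra.
  by rewrite ler_pdivrMr // mulrC; have /andP [] := FX i j.
have M'h : directly_hosts G M'.
  move=> u v; rewrite -/c GR mxE; case: (B01 u v) => ->; rewrite ?eqxx.
  - by rewrite eq_sym oner_eq0 addr0.
  - rewrite ler_pdivlMr // mulrC; have /andP [_ ] := FX u v; rewrite /X; lra.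
have sumM : \sum_(i < n) \sum_(j < n) M i j = n%:R.
  by under eq_bigr do rewrite Mrow; rewrite sumr_const card_ord.
set S' := \sum_(i < n) \sum_(j < n) M' i j.
pose eta := S' / n%:R.
have n0 : n%:R != 0 :> R by rewrite pnatr_eq0; lia.
have feas : wdt_feasible G M eta.
  by exists M'; split => //; split => //; rewrite sumM /eta divfK.
have hS : c * S' = c * n%:R - \sum_i \sum_j P i j + dot P B.
  rewrite /S' mulr_sumr.
  rewrite (eq_bigr (fun i => \sum_j (X i j - P i j + P i j * B i j))); last first.
    by move=> i _; rewrite mulr_sumr; apply: eq_bigr => j _; rewrite cM'.
  rewrite sum3 /dot.
  have -> : \sum_(i < n) \sum_j X i j = c * n%:R.
    by under eq_bigr do rewrite Xr; rewrite sumr_const card_ord mulr_natr.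
  done.
have hPP : \sum_i \sum_j P i j - dot P P <= n%:R * n%:R / 4.
  rewrite /dot -sumrB.
  rewrite -sum_quarter.
  apply: ler_sum => i _; rewrite -sumrB; apply: ler_sum => j _.
  move: (P i j) => p.
  have e : 1 / 4 - (p - p * p) = (p - 1 / 2) ^+ 2 :> R by field; done.
  have := sqr_ge0 (p - 1 / 2); rewrite -e; lra.
set y := c * eta.
have hy : c * S' = y * n%:R by rewrite /y /eta -mulrA divfK.
have hy2 : c - n%:R / 4 <= y.
  have : 0 <= (y - (c - n%:R / 4)) * n%:R.
    have -> : (y - (c - n%:R / 4)) * n%:R = y * n%:R - c * n%:R + n%:R * n%:R / 4 by ring.
    rewrite -hy hS; lra.
  by rewrite pmulr_lge0 ?subr_ge0 //; lra.
have hE : has_sup [set eta | wdt_feasible G M eta].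
  split; first by exists eta.
  exists 1 => e [M'' [M''b [_ hsum]]].
  have : e * n%:R <= 1 * n%:R.
    rewrite mul1r -sumM -hsum; apply: ler_sum => i _; apply: ler_sum => j _.
    by have [] := M''b i j.
  by rewrite ler_pM2r //; lra.
apply: (le_trans hk); apply: le_trans (sup_upper_bound hE feas).
rewrite ler_pdivrMr; last lra.
have -> : eta * (8 * n%:R - 4) = 4 * y by rewrite /y /c; ring.
have ce : c = 2 * n%:R - 1 by [].
lra.
Qed.
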